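(* Let $\mathcal{T}$ be a planar triangulation, $m\in\mathbb{Z}_{\ge0}$, $r\in\mathbb{Z}_{\ge-1}$, and $\mathbf{r}$ a smoothness distribution with values in $\{r,-1\}$ on interior edges. Let $\sigma$ be a face bounded by interior edges $\tau_1,\tau_2,\tau_3$ with $\mathbf r(\tau_i)=r$, let $\gamma_i=\tau_i\cap\tau_{i+1}$ (indices cyclic in $1,2,3$) be interior vertices with $\mathbf r(\tau)\ne-1$ for every edge $\tau$ incident on any $\gamma_i$, and let $\ell_i$ be an affine-linear form vanishing on $\tau_i$. Let $$\phi:\bigoplus_{i=1}^3{\mathcal{P}}_m/\langle\ell_i^{r+1}\rangle\longrightarrow\bigoplus_{i=1}^3{\mathcal{P}}_m/\mathfrak{J}^{\mathbf r}_{\gamma_i},\qquad (a_1,a_2,a_3)\mapsto(-a_1+a_2,\,-a_2+a_3,\,a_1-a_3),$$ and let $\mathbf s$ agree with $\mathbf r$ except that $\mathbf s(\tau_i)=-1$ for $i=1,2,3$. Then the cokernel of $\phi$, and hence $H_0(\mathcal{I}^{\mathbf s}/\mathcal{I}^{\mathbf r})$, is isomorphic to ${\mathcal{P}}_m/(\mathfrak{J}^{\mathbf r}_{\gamma_1}+\mathfrak{J}^{\mathbf r}_{\gamma_2}+\mathfrak{J}^{\mathbf r}_{\gamma_3})$.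
   Context: $\mathcal{T}$ is a finite planar triangulation of a closed polygonal region $\Omega\subset\mathbb{R}^2$ (possibly not simply connected). An edge or vertex is interior if it is not contained in $\partial\Omega$; $\mathcal{T}^\circ_1,\mathcal{T}^\circ_0$ denote interior edges and vertices. ${\mathcal{P}}_m$ is the space of real bivariate polynomials of total degree at most $m$; $\langle f_1,\dots,f_k\rangle$ denotes the subspace of ${\mathcal{P}}_m$ of all polynomial combinations $\sum g_if_i$ lying in ${\mathcal{P}}_m$. A smoothness distribution is a map $\mathbf{r}:\mathcal{T}^\circ_1\to\mathbb{Z}_{\ge -1}$. For $\tau\in\mathcal{T}^\circ_1$ with vanishing affine-linear form $\ell_\tau$, $\mathfrak{J}^{\mathbf r}_\tau=\langle \ell_\tau^{\mathbf r(\tau)+1}\rangle$ (equal to ${\mathcal{P}}_m$ if $\mathbf r(\tau)=-1$), and for $\gamma\in\mathcal{T}^\circ_0$, $\mathfrak{J}^{\mathbf r}_\gamma=\sum_{\tau\ni\gamma}\mathfrak{J}^{\mathbf r}_\tau$. $\mathcal{I}^{\mathbf r}$ is the chain complex $0\to\bigoplus_{\tau\in\mathcal{T}^\circ_1}\mathfrak{J}^{\mathbf r}_\tau\to\bigoplus_{\gamma\in\mathcal{T}^\circ_0}\mathfrak{J}^{\mathbf r}_\gamma$ (degrees $2,1,0$), whose nonzero map is the cellular boundary map of $\mathcal{T}$ relative to $\partial\Omega$ (signs $\pm1$ from fixed edge orientations). If $\mathbf s\le\mathbf r$ pointwise then $\mathcal{I}^{\mathbf r}\subseteq\mathcal{I}^{\mathbf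 s}$ and $\mathcal{I}^{\mathbf s}/\mathcal{I}^{\mathbf r}$ is the quotient complex. *)

(* Defs.v *)
From HB Require Import structures.
From mathcomp Require Import all_boot all_order all_algebra.
From mathcomp Require Import fingraph.
From mathcomp.multinomials Require Import mpoly.
Set Implicit Arguments. Unset Strict Implicit. Unset Printing Implicit Defensive.
Import Order.TTheory GRing.Theory Num.Theory.
Local Open Scope ring_scope.

(* Linear-algebra vocabulary: subspaces are given as predicates (Prop), *)
(* and an isomorphism between quotients A/B and C/D (B <= A, D <= C)    *)
(* is a linear map f with f(A) <= C, f(B) <= D inducing a bijection     *)
(* A/B -> C/D.                                                          *)
Section LinAlg.
Variable R : fieldType.

Definition lin (U W : lmodType R) (f : U -> W) : Prop :=
  forall (a : R) (x y : U), f (a *: x + y) = a *: f x + f y.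

Definition subsum (U : lmodType R) (A B : U -> Prop) : U -> Prop :=
  fun x => exists a b, A a /\ B b /\ x = a + b.

Definition subimg (U W : lmodType R) (f : U -> W) (A : U -> Prop) : W -> Prop :=
  fun y => exists x, A x /\ y = f x.

Definition quot_iso (U W : lmodType R) (A B : U -> Prop) (C D : W -> Prop)
  : Prop :=
  exists f : U -> W, [/\ lin f,
    (forall a, A a -> C (f a)),
    (forall b, B b -> D (f b)),
    (forall a, A a -> D (f a) -> B a) &
    (forall c, C c -> exists a, A a /\ D (c - f a))].
End LinAlg.

Section Polys.
Variable R : realFieldType.
Local Notation P := {mpoly R[2]}.

(* P_m : polynomials of total degree <= m *)
Definition Pm (m : nat) : P -> Prop := fun p => (msize p <= m.+1)%N.

Definition pgen (m : nat) (f : P) : P -> Prop :=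
  fun p => Pm m p /\ exists g : P, p = g * f.

Definition peval (p : P) (x : 'rV[R]_2) : R := p.@[fun i => x ord0 i].

Definition affine_form (f : P) : Prop :=
  exists a b c : R, f = a%:MP + b *: 'X_ord0 + c *: 'X_(inord 1)
                    /\ (b != 0 \/ c != 0).

Definition lform (p q : 'rV[R]_2) : P :=
  (q ord0 ord0 - p ord0 ord0) *: ('X_(inord 1) - (p ord0 (inord 1))%:MP)
  - (q ord0 (inord 1) - p ord0 (inord 1)) *: ('X_ord0 - (p ord0 ord0)%:MP).
End Polys.

Section Triang.
Variable R : realFieldType.
Variable V : finType.
Variable pt : V -> 'rV[R]_2.
Variable F : {set {set V}}.

Definition conv (S : {set V}) : 'rV[R]_2 -> Prop :=
  fun x => exists w : V -> R,
    [/\ forall v, 0 <= w v, forall v, v \notin S -> w v = 0,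
        \sum_v w v = 1 & x = \sum_v w v *: pt v].

Definition aff_indep (S : {set V}) : Prop :=
  forall w : V -> R, \sum_(v in S) w v = 0 -> \sum_(v in S) w v *: pt v = 0 ->
    forall v, v \in S -> w v = 0.

Definition faces_touch (f g : {set V}) : bool :=
  [&& f \in F, g \in F & f :&: g != set0].

Definition is_triangulation : Prop :=
  [/\ injective pt,
      (forall f, f \in F -> #|f| = 3%N /\ aff_indep f),
      (forall f g, f \in F -> g \in F -> f != g ->
          forall x, conv f x /\ conv g x <-> conv (f :&: g) x),
      (forall v : V, exists2 f, f \in F & v \in f) &
      (* Omega is a region: it is connected *)
      (forall f g, f \in F -> g \in F -> connect faces_touch f g)].

Definition is_edge (e : {set V}) : bool :=
  (#|e| == 2%N) && [exists f in F, e \subset f].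

Definition boundary_edge (e : {set V}) : bool :=
  is_edge e && (#|[set f in F | e \subset f]| == 1%N).

Definition interior_edge (e : {set V}) : bool :=
  is_edge e && ~~ boundary_edge e.

Definition interior_vertex (v : V) : bool :=
  [forall e : {set V}, boundary_edge e ==> (v \notin e)].

Variable src : {set V} -> V.
Definition dst (e : {set V}) : V := odflt (src e) [pick v in e :\ src e].

Definition orientation : Prop := forall e, is_edge e -> src e \in e.

Local Notation P := {mpoly R[2]}.

Definition ledge (e : {set V}) : P := lform (pt (src e)) (pt (dst e)).

(* smoothness distributions are maps {set V} -> int, only their values   *)
(* on interior edges matter.                                             *)
Definition smoothness (r : {set V} -> int) : Prop :=
  forall e, interior_edge e -> (-1 <= r e)%R.

Definition Jedge (m : nat) (r : {set V} -> int) (e : {set V}) : P -> Prop :=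
  pgen m (ledge e ^+ absz (r e + 1)%R).

Definition Jvert (m : nat) (r : {set V} -> int) (v : V) : P -> Prop :=
  fun p => exists g : {set V} -> P,
    [/\ forall e, interior_edge e -> v \in e -> Jedge m r e (g e),
        forall e, ~~ (interior_edge e && (v \in e)) -> g e = 0 &
        p = \sum_e g e].

(* the chain groups of I^r (as subspaces of the full coordinate spaces)  *)
Definition chains1 (m : nat) (r : {set V} -> int) : {ffun {set V} -> P} -> Prop :=
  fun c => forall e, if interior_edge e then Jedge m r e (c e) else c e = 0.

Definition chains0 (m : nat) (r : {set V} -> int) : {ffun V -> P} -> Prop :=
  fun c => forall v, if interior_vertex v then Jvert m r v (c v) else c v = 0.

(* cellular boundary map relative to the boundary of Omega *)
Definition bdry (c : {ffun {set V} -> P}) : {ffun V -> P} :=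
  [ffun v => if interior_vertex v then
     \sum_(e | interior_edge e)
        ((if v == dst e then c e else 0) - (if v == src e then c e else 0))
   else 0].

(* H_0 of the quotient complex I^s / I^r :                               *)
(*   (I^s)_0 / ((I^r)_0 + bdry (I^s)_1)                                  *)
Definition H0_quot_num (m : nat) (s : {set V} -> int) := chains0 m s.
Definition H0_quot_den (m : nat) (r s : {set V} -> int) :=
  subsum (chains0 m r) (subimg bdry (chains1 m s)).
End Triang.

Definition drop_edges (V : finType) (r : {set V} -> int) (t1 t2 t3 : {set V})
  : {set V} -> int :=
  fun e => if (e == t1) || (e == t2) || (e == t3) then (-1)%R else r e.

Definition phi_map (R : realFieldType) (x : {mpoly R[2]} * {mpoly R[2]} * {mpoly R[2]})
  : {mpoly R[2]} * {mpoly R[2]} * {mpoly R[2]} :=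
  (- x.1.1 + x.1.2, - x.1.2 + x.2, x.1.1 - x.2).

Definition triple (U : Type) (A1 A2 A3 : U -> Prop) : U * U * U -> Prop :=
  fun x => [/\ A1 x.1.1, A2 x.1.2 & A3 x.2].

(* Main.v *)
Require Import Defs.
From HB Require Import structures.
From mathcomp Require Import all_boot all_order all_algebra.
From mathcomp.multinomials Require Import mpoly.
From mathcomp Require Import ring.
Import Order.TTheory GRing.Theory Num.Theory.
Local Open Scope ring_scope.

Module Helpers.
Set Implicit Arguments. Unset Strict Implicit.

Section Closure.
Variable R : realFieldType.
Local Notation P := {mpoly R[2]}.
Variable m : nat.

Lemma Pm0 : Pm m (0 : P).
Proof. by rewrite /Pm msize0. Qed.
Lemma PmD (p q : P) : Pm m p -> Pm m q -> Pm m (p + q).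
Proof.
rewrite /Pm => hp hq; apply: leq_trans (msizeD_le p q) _.
by rewrite geq_max hp hq.
Qed.
Lemma PmN (p : P) : Pm m p -> Pm m (- p).
Proof. by rewrite /Pm msizeN. Qed.
Lemma PmB (p q : P) : Pm m p -> Pm m q -> Pm m (p - q).
Proof. by move=> hp hq; apply: PmD => //; apply: PmN. Qed.
Lemma PmZ (c : R) (p : P) : Pm m p -> Pm m (c *: p).
Proof. rewrite /Pm => hp; exact: leq_trans (msizeZ_le _ _) hp. Qed.

Lemma pgen0 (f : P) : pgen m f 0.
Proof. by split; [exact: Pm0| exists 0; rewrite mul0r]. Qed.
Lemma pgenD (f p q : P) : pgen m f p -> pgen m f q -> pgen m f (p + q).
Proof.
move=> [hp [g eg]] [hq [h eh]]; rewrite eg eh in hp hq *; split; first exact: PmD.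
by exists (g + h); rewrite mulrDl.
Qed.
Lemma pgenN (f p : P) : pgen m f p -> pgen m f (- p).
Proof. move=> [hp [g eg]]; rewrite eg in hp *; split; first exact: PmN. by exists (- g); rewrite mulNr. Qed.
Lemma pgenZ (f p : P) c : pgen m f p -> pgen m f (c *: p).
Proof. move=> [hp [g eg]]; rewrite eg in hp *; split; first exact: PmZ. by exists (c *: g); rewrite scalerAl. Qed.
Lemma pgen_Pm (f p : P) : pgen m f p -> Pm m p.
Proof. by case. Qed.
Lemma pgen1 (p : P) : Pm m p -> pgen m 1 p.
Proof. by move=> hp; split => //; exists p; rewrite mulr1. Qed.
End Closure.

Section JV.
Variable R : realFieldType.
Variable V : finType.
Variable pt : V -> 'rV[R]_2.
Variable F : {set {set V}}.
Variable src : {set V} -> V.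
Variable m : nat.
Local Notation P := {mpoly R[2]}.

Lemma Jedge0 r e : Jedge pt src m r e 0.
Proof. exact: pgen0. Qed.
Lemma Jedge_Pm r e p : Jedge pt src m r e p -> Pm m p.
Proof. exact: pgen_Pm. Qed.

Lemma Jvert0 r v : Jvert pt F src m r v 0.
Proof.
exists (fun _ => 0); split => //; last by rewrite big1.
by move=> e _ _; apply: Jedge0.
Qed.

Lemma JvertD r v p q : Jvert pt F src m r v p -> Jvert pt F src m r v q ->
  Jvert pt F src m r v (p + q).
Proof.
move=> [g [g1 g2 ->]] [h [h1 h2 ->]]; exists (fun e => g e + h e); split.
- by move=> e ie ve; apply: pgenD; [apply: g1|apply: h1].
- by move=> e he; rewrite g2 // h2 // addr0.
- by rewrite big_split.
Qed.

Lemma JvertN r v p : Jvert pt F src m r v p -> Jvert pt F src m r v (- p).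
Proof.
move=> [g [g1 g2 ->]]; exists (fun e => - g e); split.
- by move=> e ie ve; apply: pgenN; apply: g1.
- by move=> e he; rewrite g2 // oppr0.
- by rewrite sumrN.
Qed.

Lemma JvertB r v p q : Jvert pt F src m r v p -> Jvert pt F src m r v q ->
  Jvert pt F src m r v (p - q).
Proof. by move=> hp hq; apply: JvertD => //; apply: JvertN. Qed.

Lemma Jvert_edge r v e p : interior_edge F e -> v \in e ->
  Jedge pt src m r e p -> Jvert pt F src m r v p.
Proof.
move=> ie ve hp; exists (fun e' => if e' == e then p else 0); split.
- by move=> e' _ _; case: eqP => [->|_] //; apply: Jedge0.
- by move=> e'; case: eqP => [->|] //; rewrite ie ve.
- by rewrite -big_mkcond /= big_pred1_eq.
Qed.

Lemma Jvert_Pm r v p : Jvert pt F src m r v p -> Pm m p.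
Proof.
move=> [g [g1 g2 ->]]; apply: (big_ind (Pm m)); [exact: Pm0|exact: PmD|].
move=> e _; case: (boolP (interior_edge F e && (v \in e))) => [/andP[a b]|h].
  exact: Jedge_Pm (g1 _ a b).
by rewrite g2 //; apply: Pm0.
Qed.

Lemma Jvert_ext r r' v p : (forall e, interior_edge F e -> v \in e -> r e = r' e) ->
  Jvert pt F src m r v p -> Jvert pt F src m r' v p.
Proof.
move=> hrr [g [g1 g2 ->]]; exists g; split => //.
by move=> e ie ve; rewrite /Jedge -hrr //; apply: g1.
Qed.
End JV.

Section Geo.
Variable R : realFieldType.
Local Notation P := {mpoly R[2]}.

Lemma peval_aff (a b c : R) (p : 'rV[R]_2) :
  peval (a%:MP + b *: 'X_ord0 + c *: 'X_(inord 1) : P) p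
  = a + b * p ord0 ord0 + c * p ord0 (inord 1).
Proof. by rewrite /peval !mevalD !mevalZ mevalC !mevalXU. Qed.

Lemma ord2_cases (i : 'I_2) : i = ord0 \/ i = inord 1.
Proof.
case: i => [[|[|k]] hk]; [left|right|]; try by apply: val_inj; rewrite /= ?inordK.
by [].
Qed.

Lemma aff_prop (p q : 'rV[R]_2) (l : P) : p != q -> affine_form l ->
  peval l p = 0 -> peval l q = 0 -> exists k, l = k *: lform p q.
Proof.
move=> pq [a [b [c [-> _]]]]; rewrite !peval_aff => hp hq.
rewrite /lform.
set p0 : R := p ord0 ord0; set p1 : R := p ord0 (inord 1).
set q0 : R := q ord0 ord0; set q1 : R := q ord0 (inord 1).
have {hp}hp : a + b * p0 + c * p1 = 0 := hp.
have {hq}hq : a + b * q0 + c * q1 = 0 := hq.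
set u := q0 - p0; set w := q1 - p1.
have huw : b * u + c * w = 0.
  have e : (a + b * q0 + c * q1) - (a + b * p0 + c * p1) = 0 :> R by rewrite hp hq subr0.
  by rewrite -e /u /w; ring.
have [k [hb hc]] : exists k, b = - (k * w) /\ c = k * u.
  have [u0|u0] := eqVneq u 0.
    have w0 : w != 0.
      apply/eqP => w0; move/eqP: pq; apply; apply/rowP => i.
      have := ord2_cases i; case=> ->.
        by apply/eqP; rewrite eq_sym -subr_eq0; apply/eqP.
      by apply/eqP; rewrite eq_sym -subr_eq0; apply/eqP.
    exists (- b / w); split; first by field.
    move: huw; rewrite u0 mulr0 add0r => /eqP; rewrite mulf_eq0 (negbTE w0) orbF.
    by move/eqP->; rewrite mulr0.
  exists (c / u); split; last by field.
  have : b * u = - (c * w) by apply/eqP; rewrite -subr_eq0 opprK; apply/eqP.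
  move=> e; apply: (mulIf u0); rewrite e; by field.
have ha : a = k * w * p0 - k * u * p1.
  by rewrite -[a]subr0 -{1}hp hb hc; ring.
clearbody u w; clearbody p0 p1 q0 q1.
exists k; rewrite ha hb hc.
rewrite -!mul_mpolyC !rmorphB !rmorphN !rmorphM /=. ring.
Qed.
End Geo.

Section Sets.
Variable V : finType.

Lemma union_full (S A B : {set V}) x : #|S| = 3%N -> #|A| = 2%N -> #|B| = 2%N ->
  A \subset S -> B \subset S -> A :&: B = [set x] -> A :|: B = S.
Proof.
move=> hS hA hB AS BS hAB; apply/eqP; rewrite eqEcard subUset AS BS /=.
by rewrite cardsU hA hB hAB cards1 hS.
Qed.

Lemma tri_sets (S t1 t2 t3 : {set V}) g1 g2 g3 : #|S| = 3%N ->
  #|t1| = 2%N -> #|t2| = 2%N -> #|t3| = 2%N ->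
  t1 \subset S -> t2 \subset S -> t3 \subset S ->
  t1 :&: t2 = [set g1] -> t2 :&: t3 = [set g2] -> t3 :&: t1 = [set g3] ->
  [/\ t1 = [set g1; g3], t2 = [set g2; g1], t3 = [set g3; g2] &
      [/\ g1 != g3, g2 != g1 & g3 != g2]].
Proof.
move=> hS h1 h2 h3 s1 s2 s3 e12 e23 e31.
have u12 := union_full hS h1 h2 s1 s2 e12.
have u23 := union_full hS h2 h3 s2 s3 e23.
have u31 := union_full hS h3 h1 s3 s1 e31.
have E1 : t1 = [set g1; g3].
  by rewrite -(setIidPl s1) -u23 setIUr e12 setIC e31.
have E2 : t2 = [set g2; g1].
  by rewrite -(setIidPl s2) -u31 setIUr e23 setIC e12.
have E3 : t3 = [set g3; g2].
  by rewrite -(setIidPl s3) -u12 setIUr e31 setIC e23.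
split => //; split.
- by move: h1; rewrite E1 cards2; case: (g1 != g3).
- by move: h2; rewrite E2 cards2; case: (g2 != g1).
- by move: h3; rewrite E3 cards2; case: (g3 != g2).
Qed.
End Sets.

Section Bd.
Variable R : realFieldType.
Variable V : finType.
Variable pt : V -> 'rV[R]_2.
Variable F : {set {set V}}.
Variable src : {set V} -> V.
Variable m : nat.
Local Notation P := {mpoly R[2]}.

Lemma src_dst (e : {set V}) : #|e| = 2%N -> src e \in e ->
  dst src e \in e /\ dst src e != src e.
Proof.
move=> he hs; rewrite /dst; case: pickP => [v|h] /=.
  by rewrite in_setD1 => /andP[-> ->].
have := cardsD1 (src e) e; rewrite hs he.
have -> : #|e :\ src e| = 0%N by apply/eqP; rewrite cards_eq0; apply/eqP/setP=> v; rewrite in_set0; apply: negbTE; apply/negP => hv; have := h v; rewrite /= hv.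
by [].
Qed.

Lemma edge_ends x y (e : {set V}) : e = [set x; y] -> x != y -> src e \in e ->
  (src e = x /\ dst src e = y) \/ (src e = y /\ dst src e = x).
Proof.
move=> E xy hs.
have he : #|e| = 2%N by rewrite E cards2 xy.
have [hd nd] := src_dst he hs.
have hs' : (src e == x) || (src e == y) by rewrite -in_set2 -E.
have hd' : (dst src e == x) || (dst src e == y) by rewrite -in_set2 -E.
move: nd; case/orP: hs' => /eqP ->; case/orP: hd' => /eqP ->; rewrite ?eqxx //; auto.
Qed.

Definition term (v : V) (e : {set V}) (x : P) : P :=
  (if v == dst src e then x else 0) - (if v == src e then x else 0).

Lemma term0 v e : term v e 0 = 0.
Proof. by rewrite /term !if_same subr0. Qed.

Lemma bdryE c v : bdry F src c v =
  if interior_vertex F v then \sum_(e | interior_edge F e) term v e (c e) else 0.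
Proof. by rewrite /bdry ffunE. Qed.

Lemma term_orient x y t a v : t = [set x; y] -> x != y -> src t \in t ->
  term v t (if dst src t == y then a else - a) =
  (if v == y then a else 0) - (if v == x then a else 0).
Proof.
move=> E xy hs; rewrite /term.
case: (edge_ends E xy hs) => [[-> ->]|[-> ->]]; first by rewrite eqxx.
rewrite (negbTE xy).
case vx: (v == x); case vy: (v == y); rewrite ?subrr ?sub0r ?subr0 ?opprK //.
Qed.

Lemma sum_two t1 t2 x1 x2 v : t1 != t2 -> interior_edge F t1 -> interior_edge F t2 ->
  \sum_(e | interior_edge F e)
     term v e (if e == t1 then x1 else if e == t2 then x2 else 0)
  = term v t1 x1 + term v t2 x2.
Proof.
move=> t12 i1 i2.
rewrite (bigD1 t1) //= eqxx (bigD1 t2) /=; last by rewrite i2 eq_sym.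
rewrite eq_sym (negbTE t12) eqxx big1 ?addr0 // => e /andP[/andP[_ h1] h2].
by rewrite (negbTE h1) (negbTE h2) term0.
Qed.

Lemma Jvert_term r v e x : interior_edge F e -> #|e| = 2%N -> src e \in e ->
  Jedge pt src m r e x -> Jvert pt F src m r v (term v e x).
Proof.
move=> ie he hs hx; have [hd _] := src_dst he hs.
rewrite /term; apply: JvertB.
  case: eqP => [->|_]; [exact: Jvert_edge hx|exact: Jvert0].
case: eqP => [->|_]; [exact: Jvert_edge hx|exact: Jvert0].
Qed.
End Bd.

Section D3.
Variable R : fieldType.
Variable U : lmodType R.
Variables A B C : U -> Prop.

Lemma D3_intro x y z : A x -> B y -> C z -> subsum (subsum A B) C (x + y + z).
Proof. by move=> hx hy hz; exists (x + y), z; split => //; exists x, y. Qed.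

Lemma D3_elim u : subsum (subsum A B) C u ->
  exists x y z, [/\ A x, B y, C z & u = x + y + z].
Proof. by move=> [a [z [[x [y [hx [hy ->]]]] [hz ->]]]]; exists x, y, z. Qed.

Lemma D3_add : (forall x y, A x -> A y -> A (x + y)) ->
  (forall x y, B x -> B y -> B (x + y)) -> (forall x y, C x -> C y -> C (x + y)) ->
  forall u v, subsum (subsum A B) C u -> subsum (subsum A B) C v ->
  subsum (subsum A B) C (u + v).
Proof.
move=> hA hB hC u v /D3_elim[x [y [z [hx hy hz ->]]]] /D3_elim[x' [y' [z' [hx' hy' hz' ->]]]].
have -> : x + y + z + (x' + y' + z') = (x + x') + (y + y') + (z + z').
  by rewrite (addrACA (x + y) z (x' + y') z') (addrACA x y x' y').
by apply: D3_intro; auto.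
Qed.
End D3.

Lemma addr3ACA (U : zmodType) (a b c d e f : U) :
  (a + b) + (c + d) + (e + f) = (a + c + e) + (b + d + f).
Proof. by rewrite (addrACA a b c d) (addrACA (a + c) (b + d) e f). Qed.

Lemma pairE3 (T1 T2 T3 : Type) (u : T1 * T2 * T3) : u = (u.1.1, u.1.2, u.2).
Proof. by case: u => [[]]. Qed.

Section Edge.
Variable R : realFieldType.
Variable V : finType.
Variable pt : V -> 'rV[R]_2.
Variable F : {set {set V}}.
Variable src : {set V} -> V.
Variable m : nat.
Local Notation P := {mpoly R[2]}.

Lemma pgen_ledge r (r0 : int) t (l : P) a : injective pt -> interior_edge F t ->
  src t \in t -> affine_form l -> (forall v, v \in t -> peval l (pt v) = 0) ->
  r t = r0 -> pgen m (l ^+ absz (r0 + 1)) a -> Jedge pt src m r t a.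
Proof.
move=> inj ie hs hl hz hrt [ha [g eg]].
have he : #|t| = 2%N by case/andP: ie => /andP[/eqP].
have [hd nd] := src_dst he hs.
have pq : pt (src t) != pt (dst src t).
  by apply: contra nd => /eqP /inj ->.
have [k ek] := aff_prop pq hl (hz _ hs) (hz _ hd).
rewrite /Jedge hrt; split => //.
exists (k ^+ absz (r0 + 1) *: g); rewrite eg ek exprZn /ledge.
by rewrite -scalerAl -scalerAr.
Qed.
End Edge.
End Helpers.
Import Helpers.

Theorem mainTheorem3
  (R : realFieldType) (V : finType) (pt : V -> 'rV[R]_2)
  (F : {set {set V}}) (src : {set V} -> V)
  (m : nat) (r0 : int) (r : {set V} -> int)
  (sigma t1 t2 t3 : {set V}) (g1 g2 g3 : V) (l1 l2 l3 : {mpoly R[2]})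
  (hT : is_triangulation pt F) (hO : orientation F src)
  (hr0 : -1 <= r0)
  (hr : forall e, interior_edge F e -> r e = r0 \/ r e = -1)
  (hsigma : sigma \in F)
  (ht1 : t1 \subset sigma) (ht2 : t2 \subset sigma) (ht3 : t3 \subset sigma)
  (hi1 : interior_edge F t1) (hi2 : interior_edge F t2) (hi3 : interior_edge F t3)
  (hrt1 : r t1 = r0) (hrt2 : r t2 = r0) (hrt3 : r t3 = r0)
  (hg1 : t1 :&: t2 = [set g1]) (hg2 : t2 :&: t3 = [set g2])
  (hg3 : t3 :&: t1 = [set g3])
  (hv1 : interior_vertex F g1) (hv2 : interior_vertex F g2)
  (hv3 : interior_vertex F g3)
  (hn1 : forall e, interior_edge F e -> g1 \in e -> r e != -1)
  (hn2 : forall e, interior_edge F e -> g2 \in e -> r e != -1)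
  (hn3 : forall e, interior_edge F e -> g3 \in e -> r e != -1)
  (hl1 : affine_form l1) (hl2 : affine_form l2) (hl3 : affine_form l3)
  (hz1 : forall v, v \in t1 -> peval l1 (pt v) = 0)
  (hz2 : forall v, v \in t2 -> peval l2 (pt v) = 0)
  (hz3 : forall v, v \in t3 -> peval l3 (pt v) = 0) :
  let s := drop_edges r t1 t2 t3 in
  let J1 := Jvert pt F src m r g1 in
  let J2 := Jvert pt F src m r g2 in
  let J3 := Jvert pt F src m r g3 in
  let Pm3 := triple (Pm m) (Pm m) (Pm m) in
  let target_num := Pm m in
  let target_den := subsum (subsum J1 J2) J3 in
  [/\ (* phi is well defined on the quotients *)
      (forall x, triple (pgen m (l1 ^+ absz (r0 + 1)))
                        (pgen m (l2 ^+ absz (r0 + 1)))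
                        (pgen m (l3 ^+ absz (r0 + 1))) x ->
                 triple J1 J2 J3 (phi_map x)),
      (* coker phi = (P_m^3) / (J1 + J2 + J3 (+) image phi) ~ P_m / (J1+J2+J3) *)
      quot_iso Pm3 (subsum (triple J1 J2 J3) (subimg (@phi_map R) Pm3))
               target_num target_den &
      (* H_0(I^s / I^r) ~ P_m / (J1 + J2 + J3) *)
      quot_iso (H0_quot_num pt F src m s) (H0_quot_den pt F src m r s)
               target_num target_den].
Proof.
move=> s J1 J2 J3 Pm3 tn td.
case: hT => inj hf _ _ _.
have hS : #|sigma| = 3%N by case: (hf _ hsigma).
have c1 : #|t1| = 2%N by case/andP: hi1 => /andP[/eqP].
have c2 : #|t2| = 2%N by case/andP: hi2 => /andP[/eqP].
have c3 : #|t3| = 2%N by case/andP: hi3 => /andP[/eqP].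
have [E1 E2 E3 [d13 d21 d32]] := tri_sets hS c1 c2 c3 ht1 ht2 ht3 hg1 hg2 hg3.
have s1 : src t1 \in t1 by apply: hO; case/andP: hi1.
have s2 : src t2 \in t2 by apply: hO; case/andP: hi2.
have s3 : src t3 \in t3 by apply: hO; case/andP: hi3.
have g1t1 : g1 \in t1 by rewrite E1 !inE eqxx.
have g3t1 : g3 \in t1 by rewrite E1 !inE eqxx orbT.
have g2t2 : g2 \in t2 by rewrite E2 !inE eqxx.
have g1t2 : g1 \in t2 by rewrite E2 !inE eqxx orbT.
have g3t3 : g3 \in t3 by rewrite E3 !inE eqxx.
have g2t3 : g2 \in t3 by rewrite E3 !inE eqxx orbT.
have hJ1 : forall x y, J1 x -> J1 y -> J1 (x + y) by move=> x y; apply: JvertD.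
have hJ2 : forall x y, J2 x -> J2 y -> J2 (x + y) by move=> x y; apply: JvertD.
have hJ3 : forall x y, J3 x -> J3 y -> J3 (x + y) by move=> x y; apply: JvertD.
have td0 : td 0.
  by rewrite -[0]addr0 -[0 + 0]addr0; apply: D3_intro; apply: Jvert0.
have tdD := D3_add hJ1 hJ2 hJ3.
split.
-
  move=> [[a1 a2] a3] [/= h1 h2 h3].
  have e1 := pgen_ledge inj hi1 s1 hl1 hz1 hrt1 h1.
  have e2 := pgen_ledge inj hi2 s2 hl2 hz2 hrt2 h2.
  have e3 := pgen_ledge inj hi3 s3 hl3 hz3 hrt3 h3.
  split => /=.
  + apply: JvertD.
      exact: JvertN (Jvert_edge hi1 g1t1 e1).
    exact: Jvert_edge hi2 g1t2 e2.
  + apply: JvertD.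
      exact: JvertN (Jvert_edge hi2 g2t2 e2).
    exact: Jvert_edge hi3 g2t3 e3.
  + apply: JvertB.
      exact: Jvert_edge hi1 g3t1 e1.
    exact: Jvert_edge hi3 g3t3 e3.
-
  exists (fun x => x.1.1 + x.1.2 + x.2); split.
  + move=> k x y /=.
    by rewrite !scalerDr addr3ACA.
  + move=> [[b1 b2] b3] [/= h1 h2 h3]; apply: PmD => //; exact: PmD.
  + move=> b [j [y [hj [[x [hx ->]] ->]]]].
    case: hj => hj1 hj2 hj3.
    have -> : (j + phi_map x).1.1 + (j + phi_map x).1.2 + (j + phi_map x).2
              = j.1.1 + j.1.2 + j.2.
      by rewrite /phi_map /=; ring.
    exact: D3_intro.
  + move=> [[b1 b2] b3] [/= h1 h2 h3] /D3_elim [j1 [j2 [j3 [hj1 hj2 hj3 heq]]]].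
    exists (j1, j2, j3), (phi_map (0, b1 - j1, b1 - j1 + (b2 - j2))).
    split; first by split.
    split.
      exists (0, b1 - j1, b1 - j1 + (b2 - j2)); split => //.
      have P1 := Jvert_Pm hj1; have P2 := Jvert_Pm hj2.
      split => /=; [exact: Pm0|exact: PmB|apply: PmD; exact: PmB].
    rewrite [RHS]pairE3 /phi_map /=.
    have -> : b3 = j1 + j2 + j3 - b1 - b2.
      by rewrite -heq; ring.
    congr (_, _, _); ring.
  + move=> c hc; exists (c, 0, 0); split.
      by split => //=; apply: Pm0.
    by rewrite /= !addr0 subrr.
-
  have n12 : (g1 == g2) = false by rewrite eq_sym (negbTE d21).
  have n21 : (g2 == g1) = false by rewrite (negbTE d21).
  have n13 : (g1 == g3) = false by rewrite (negbTE d13).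
  have n31 : (g3 == g1) = false by rewrite eq_sym (negbTE d13).
  have n23 : (g2 == g3) = false by rewrite eq_sym (negbTE d32).
  have n32 : (g3 == g2) = false by rewrite (negbTE d32).
  have hsT : forall e, (e == t1) || (e == t2) || (e == t3) -> s e = -1.
    by move=> e he; rewrite /s /drop_edges he.
  have hsN : forall e, ~~ ((e == t1) || (e == t2) || (e == t3)) -> s e = r e.
    by move=> e he; rewrite /s /drop_edges (negbTE he).
  have JsT : forall e p, (e == t1) || (e == t2) || (e == t3) -> Pm m p ->
      Jedge pt src m s e p.
    move=> e p he hp; rewrite /Jedge hsT // addNr /= expr0; exact: pgen1.
  have inG : forall e u, (e == t1) || (e == t2) || (e == t3) -> u \in e ->
      (u == g1) || (u == g2) || (u == g3).
    move=> e u /orP[/orP[]|] /eqP ->; rewrite ?E1 ?E2 ?E3 !inE => /orP[] ->;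
      by rewrite ?orbT.
  have sum3 : forall u (x : {mpoly R[2]}), (u == g1) || (u == g2) || (u == g3) ->
      (if g1 == u then x else 0) + (if g2 == u then x else 0)
      + (if g3 == u then x else 0) = x.
    move=> u x /orP[/orP[]|] /eqP ->;
      by rewrite eqxx ?n12 ?n21 ?n13 ?n31 ?n23 ?n32 ?addr0 ?add0r.
  exists (fun c : {ffun V -> {mpoly R[2]}} => c g1 + c g2 + c g3); split.
  + move=> k x y; by rewrite !ffunE !scalerDr addr3ACA.
  + move=> a ha.
    have := ha g1; rewrite hv1 => /Jvert_Pm P1.
    have := ha g2; rewrite hv2 => /Jvert_Pm P2.
    have := ha g3; rewrite hv3 => /Jvert_Pm P3.
    by apply: PmD => //; apply: PmD.
  + move=> b [c0 [y [hc0 [[c [hc ->]] ->]]]].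
    rewrite !ffunE addr3ACA; apply: (tdD).
      apply: D3_intro.
      * by have := hc0 g1; rewrite hv1.
      * by have := hc0 g2; rewrite hv2.
      * by have := hc0 g3; rewrite hv3.
    rewrite hv1 hv2 hv3 -!big_split /=.
    apply: (big_ind td td0 tdD) => e ie.
    have ce : #|e| = 2%N by case/andP: ie => /andP[/eqP].
    have se : src e \in e by apply: hO; case/andP: ie.
    have [de _] := src_dst ce se.
    have := hc e; rewrite ie => hce.
    case eT: ((e == t1) || (e == t2) || (e == t3)).
        set A1 := (if g1 == dst src e then _ else _).
        set A2 := (if g2 == dst src e then _ else _).
        set A3 := (if g3 == dst src e then _ else _).
        set B1 := (if g1 == src e then _ else _).
        set B2 := (if g2 == src e then _ else _).
        set B3 := (if g3 == src e then _ else _).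
        have -> : A1 - B1 + (A2 - B2) + (A3 - B3) = (A1 + A2 + A3) - (B1 + B2 + B3) by ring.
        rewrite /A1 /A2 /A3 /B1 /B2 /B3 !sum3 ?subrr; first exact: td0.
        by apply: (inG e); [rewrite eT|exact: se].
        by apply: (inG e); [rewrite eT|exact: de].
    have hce' : Jedge pt src m r e (c e).
      by move: hce; rewrite /Jedge hsN ?eT.
    by apply: D3_intro; apply: Jvert_term.
  + move=> a ha /D3_elim [j1 [j2 [j3 [hj1 hj2 hj3 heq]]]].
    have Pa : forall v, Pm m (a v).
      move=> v; have := ha v; case: (interior_vertex F v) => [/Jvert_Pm //|->].
      exact: Pm0.
    set d2 := a g2 - j2; set d3 := a g3 - j3.
    have E1' : t1 = [set g1; g3] := E1.
    have E2' : t2 = [set g1; g2] by rewrite E2 setUC.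
    have t12 : t1 != t2.
      apply/eqP => e; move: g3t1; rewrite e E2 !inE n32 n31.
      by [].
    pose c := [ffun e => if e == t1 then (if dst src t1 == g3 then d3 else - d3)
                 else if e == t2 then (if dst src t2 == g2 then d2 else - d2) else 0].
    have hb : forall v, bdry F src c v = if interior_vertex F v then
       ((if v == g3 then d3 else 0) - (if v == g1 then d3 else 0))
       + ((if v == g2 then d2 else 0) - (if v == g1 then d2 else 0)) else 0.
      move=> v; rewrite bdryE; case: (interior_vertex F v) => //.
      under eq_bigr do rewrite ffunE.
      rewrite sum_two //.
      by rewrite (term_orient _ _ E1' d13 s1) (term_orient _ _ E2' (negbT n12) s2).
    exists [ffun v => a v - bdry F src c v], (bdry F src c); split; last split.
    * move=> v; rewrite ffunE hb.
      case iv: (interior_vertex F v); last first.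
        by have := ha v; rewrite iv => ->; rewrite subr0.
      case: (eqVneq v g1) => [->|v1].
        rewrite n13 n12 !sub0r.
        have -> : a g1 - (- d3 + - d2) = j1.
          have ej1 : j1 = a g1 + a g2 + a g3 - j2 - j3 by rewrite heq; ring.
          by rewrite ej1 /d2 /d3; ring.
        exact: hj1.
      case: (eqVneq v g2) => [->|v2].
        rewrite ?n21 ?n23 subrr add0r subr0.
        by rewrite /d2 opprB addrC subrK.
      case: (eqVneq v g3) => [->|v3].
        rewrite ?n31 ?n32 ?n13 ?n23 subrr addr0 subr0.
        by rewrite /d3 opprB addrC subrK.
      rewrite ?(negbTE v1) ?(negbTE v2) ?(negbTE v3) subrr addr0 subr0.
      have := ha v; rewrite iv; apply: Jvert_ext => e ie ve.
      apply: hsN; apply/negP => /inG /(_ ve).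
      by rewrite (negbTE v1) (negbTE v2) (negbTE v3).
    * exists c; split => // e; rewrite ffunE.
      case: (eqVneq e t1) => [->|n1].
        rewrite hi1; apply: JsT; first by rewrite eqxx.
        by case: ifP => _; [|apply: PmN]; apply: PmB => //; apply: Jvert_Pm hj3.
      case: (eqVneq e t2) => [->|n2].
        rewrite hi2; apply: JsT; first by rewrite eqxx orbT.
        by case: ifP => _; [|apply: PmN]; apply: PmB => //; apply: Jvert_Pm hj2.
      by case: ifP => _ //; apply: Jedge0.
    * by apply/ffunP => v; rewrite !ffunE subrK.
  + move=> p hp; exists [ffun v => if v == g1 then p else 0]; split.
      move=> v; rewrite ffunE; case: (eqVneq v g1) => [->|_].
        by rewrite hv1; apply: Jvert_edge hi1 g1t1 _; apply: JsT; rewrite ?eqxx.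
      by case: ifP => _ //; apply: Jvert0.
    by rewrite !ffunE eqxx n21 n31 !addr0 subrr.
Qed.
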